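(* Let $K,T\subset\mathbb{R}^n$ be convex bodies and let $q=(q_1,\dots,q_m)$ be a closed $(K,T)$-Minkowski billiard trajectory with respect to the $K$-supporting hyperplanes $H_1,\dots,H_m$, with associated outer unit normal vectors $n_K(q_1),\dots,n_K(q_m)$ normal to $H_1,\dots,H_m$. Then $0\in\operatorname{conv}\{n_K(q_1),\dots,n_K(q_m)\}$. If moreover $T$ is smooth, then the convex cone $\widetilde U$ spanned by $n_K(q_1),\dots,n_K(q_m)$ is a linear subspace of $\mathbb{R}^n$ with $\dim\widetilde U\le m-1$.
   Context: A convex body is a compact convex set in $\mathbb{R}^n$ containing the origin in its interior; it is smooth if through each boundary point there is a unique supporting hyperplane. For a convex set $C$ and $z\in\partial C$, $N_C(z)=\{v:\langle v,y-z\rangle\le 0\ \forall y\in C\}$. A closed polygonal curve $(q_1,\dots,q_m)$, $m\ge2$, always satisfies $q_j\ne q_{j+1}$ and $q_j\notin[q_{j-1},q_{j+1}]$ (indices mod $m$). A closed polygonal curve $q$ with vertices on $\partial K$ is a closed $(K,T)$-Minkowski billiard trajectory with respect to the $K$-supporting hyperplanes $H_1,\dots,H_m$ through $q_1,\dots,q_m$ if there are $p_1,\dots,p_m\in\partial T$, outer unit normals $n_K(q_j)\in N_K(q_j)$ normal to $H_j$, and $\mu_j\ge 0$ with $q_{j+1}-q_j\in N_T(p_j)$ and $p_{j+1}-p_j=-\mu_{j+1}n_K(q_{j+1})$ for all $j$. *)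

(* Defs.v *)
From HB Require Import structures.
From mathcomp Require Import all_boot all_order all_algebra.
From mathcomp Require Import all_classical all_reals all_analysis.
Set Implicit Arguments. Unset Strict Implicit. Unset Printing Implicit Defensive.
Import Order.TTheory GRing.Theory Num.Theory.
Import numFieldNormedType.Exports.
Local Open Scope classical_set_scope.
Local Open Scope ring_scope.

Section Defs.
Variables (R : realType) (n : nat).
Local Notation vec := 'rV[R]_n.

Definition dotv (u v : vec) : R := \sum_(i < n) u 0 i * v 0 i.

Definition convex_set (C : set vec) : Prop :=
  forall x y (t : R), C x -> C y -> 0 <= t -> t <= 1 -> C ((1 - t) *: x + t *: y).

Definition convex_body (C : set vec) : Prop :=
  [/\ convex_set C, compact C & (interior C) 0].

Definition bd (C : set vec) : set vec := closure C `\` interior C.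

Definition normal_cone (C : set vec) (z : vec) : set vec :=
  [set v | forall y, C y -> dotv v (y - z) <= 0].

Definition supporting_hyperplane (C : set vec) (z : vec) (H : set vec) : Prop :=
  exists (a : vec) (c : R), [/\ a != 0, H = [set x | dotv a x = c], H z
                               & forall y, C y -> dotv a y <= c].

Definition smooth (C : set vec) : Prop :=
  forall z, bd C z -> forall H1 H2, supporting_hyperplane C z H1 ->
    supporting_hyperplane C z H2 -> H1 = H2.

Definition normal_to (v : vec) (H : set vec) : Prop :=
  forall x y, H x -> H y -> dotv v (x - y) = 0.

Definition segment (a b : vec) : set vec :=
  [set (1 - t) *: a + t *: b | t in [set t : R | 0 <= t <= 1]].

(* closed polygonal curve (q_1,...,q_m), indices mod m (via ordS / ord_pred) *)
Definition closed_polygonal (m : nat) (q : 'I_m -> vec) : Prop :=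
  (2 <= m)%N /\
  forall j : 'I_m, q j != q (ordS j) /\ ~ segment (q (ord_pred j)) (q (ordS j)) (q j).

Definition minkowski_billiard (K T : set vec) (m : nat) (q : 'I_m -> vec)
    (H : 'I_m -> set vec) (nK : 'I_m -> vec) : Prop :=
  [/\ closed_polygonal q,
      forall j, bd K (q j),
      forall j, supporting_hyperplane K (q j) (H j),
      forall j, [/\ normal_cone K (q j) (nK j), dotv (nK j) (nK j) = 1
                   & normal_to (nK j) (H j)]
    & exists (p : 'I_m -> vec) (mu : 'I_m -> R),
        forall j, [/\ bd T (p j), 0 <= mu j,
                     normal_cone T (p j) (q (ordS j) - q j)
                   & p (ordS j) - p j = - (mu (ordS j) *: nK (ordS j))]].

Definition cone_span (m : nat) (v : 'I_m -> vec) : set vec :=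
  [set x | exists lam : 'I_m -> R, (forall j, 0 <= lam j) /\ x = \sum_j lam j *: v j].

Definition in_conv_hull (m : nat) (v : 'I_m -> vec) (x : vec) : Prop :=
  exists lam : 'I_m -> R, [/\ forall j, 0 <= lam j, \sum_j lam j = 1
                            & x = \sum_j lam j *: v j].

Definition linear_subspace (U : set vec) : Prop :=
  U 0 /\ forall (a : R) x y, U x -> U y -> U (a *: x + y).

(* dim U <= d : U is the row space of some d x n matrix *)
Definition dim_le (U : set vec) (d : nat) : Prop :=
  exists B : 'M[R]_(d, n), U = [set x | (x <= B)%MS].

End Defs.

(* Main.v *)
Require Import Defs.
From HB Require Import structures.
From mathcomp Require Import all_boot all_order all_algebra.
From mathcomp Require Import all_classical all_reals all_analysis.
From mathcomp Require Import ring lra.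
Set Implicit Arguments. Unset Strict Implicit.
Import Order.TTheory GRing.Theory Num.Theory.
Import numFieldNormedType.Exports.
Local Open Scope classical_set_scope.
Local Open Scope ring_scope.

Section H.
Variables (R : realType) (n : nat).
Local Notation vec := 'rV[R]_n.
Implicit Types u v w : vec.

Lemma dotvC u v : dotv u v = dotv v u.
Proof. by apply: eq_bigr => i _; rewrite mulrC. Qed.

Lemma dotvDl u w v : dotv (u + w) v = dotv u v + dotv w v.
Proof. by rewrite /dotv -big_split; apply: eq_bigr => i _; rewrite !mxE mulrDl. Qed.

Lemma dotvZl a u v : dotv (a *: u) v = a * dotv u v.
Proof. by rewrite /dotv mulr_sumr; apply: eq_bigr => i _; rewrite !mxE mulrA. Qed.

Lemma dotvNl u v : dotv (- u) v = - dotv u v.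
Proof. by rewrite -scaleN1r dotvZl mulN1r. Qed.

Lemma dotvBl u w v : dotv (u - w) v = dotv u v - dotv w v.
Proof. by rewrite dotvDl dotvNl. Qed.

Lemma dotvDr u w v : dotv v (u + w) = dotv v u + dotv v w.
Proof. by rewrite !(dotvC v) dotvDl. Qed.

Lemma dotvZr a u v : dotv v (a *: u) = a * dotv v u.
Proof. by rewrite !(dotvC v) dotvZl. Qed.

Lemma dotvBr u w v : dotv v (u - w) = dotv v u - dotv v w.
Proof. by rewrite !(dotvC v) dotvBl. Qed.

Lemma dotv_ge0 u : 0 <= dotv u u.
Proof. by apply: sumr_ge0 => i _; rewrite -expr2 sqr_ge0. Qed.

Lemma dotv_eq0 u : dotv u u = 0 -> u = 0.
Proof.
move=> /eqP; rewrite psumr_eq0 => [/allP h|i _]; last by rewrite -expr2 sqr_ge0.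
apply/rowP => i; rewrite mxE.
have := h i (mem_index_enum i); rewrite /= -expr2 sqrf_eq0 => /eqP.
by [].
Qed.

Lemma dotv_gt0 u : u != 0 -> 0 < dotv u u.
Proof.
move=> hu; rewrite lt_neqAle dotv_ge0 andbT eq_sym.
by apply/eqP => /dotv_eq0 h; rewrite h eqxx in hu.
Qed.

Lemma nc_pos (T : set vec) p v : (interior T) 0 -> normal_cone T p v -> v != 0 ->
  0 < dotv v p.
Proof.
move=> hT hnc hv.
have [t [t0 Tt]] : exists t : R, 0 < t /\ T (t *: v).
  have h : (fun t : R => t *: v) @ (nbhs (0:R)) --> (0:R) *: v.
    apply: cvgZr_tmp. exact: cvg_id.
  rewrite scale0r in h.
  have := h _ hT.
  move=> /nbhs_ballP [e /= e0 he].
  exists (e/2); split; first by rewrite divr_gt0.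
  apply: he. rewrite /ball /= sub0r normrN ger0_norm ?divr_ge0 ?ltW//.
  by rewrite ltr_pdivrMr // ltr_pMr // ltr1n.
have := hnc _ Tt; rewrite dotvBr dotvZr subr_le0 => h.
apply: lt_le_trans h; apply: mulr_gt0 => //; exact: dotv_gt0.
Qed.


Lemma ray (T : set vec) p v w : (interior T) 0 -> smooth T -> bd T p ->
  normal_cone T p v -> normal_cone T p w -> v != 0 -> w != 0 ->
  exists c : R, 0 < c /\ w = c *: v.
Proof.
move=> hT sT bp nv nw v0 w0.
have supp : forall a, normal_cone T p a -> a != 0 ->
    supporting_hyperplane T p [set x | dotv a x = dotv a p].
  move=> a na a0; exists a, (dotv a p); split => //.
  by move=> y Ty; have := na _ Ty; rewrite dotvBr subr_le0.
have eqH := sT p bp _ _ (supp _ nv v0) (supp _ nw w0).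
have key : forall x, dotv v x = dotv v p -> dotv w x = dotv w p.
  move=> x hx; have : [set x | dotv v x = dotv v p] x by [].
  by rewrite eqH.
have vv0 := dotv_gt0 v0.
set c := dotv w v / dotv v v.
have hu : forall u, dotv w u = c * dotv v u.
  move=> u.
  have := key (p + (u - (dotv v u / dotv v v) *: v)).
  rewrite dotvDr dotvBr dotvZr divfK ?gt_eqF // subrr addr0 => /(_ erefl).
  rewrite dotvDr dotvBr dotvZr => /eqP.
  rewrite -subr_eq0 addrAC subrr add0r subr_eq0 => /eqP ->.
  by rewrite /c (dotvC w v); field; rewrite gt_eqF.
have wc : w = c *: v.
  apply/eqP; rewrite -subr_eq0; apply/eqP; apply: dotv_eq0.
  by rewrite dotvBl dotvZl -hu subrr.
exists c; split => //.
have pw := nc_pos hT nw w0; have pv := nc_pos hT nv v0.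
rewrite hu in pw.
by rewrite -(pmulr_lgt0 _ pv).
Qed.


Lemma anycoef m (nK : 'I_m -> vec) (mu : 'I_m -> R) (g : 'I_m -> R) :
  (forall j, 0 < mu j) -> \sum_j mu j *: nK j = 0 ->
  cone_span nK (\sum_j g j *: nK j).
Proof.
move=> mu0 hs.
set M := \sum_j `|g j| / mu j.
exists (fun j => M * mu j + g j); split.
  move=> j.
  have hM : `|g j| / mu j <= M.
    rewrite /M (bigD1 j) //= lerDl; apply: sumr_ge0 => i _.
    by rewrite divr_ge0 // ltW.
  have : `|g j| <= M * mu j by rewrite -ler_pdivrMr.
  have := ler_norm (- g j); rewrite normrN => h1 h2; lra.
apply/esym; under eq_bigr do rewrite scalerDl -scalerA.
by rewrite big_split /= -scaler_sumr hs scaler0 add0r.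
Qed.


Lemma sum_ordS (V : zmodType) m (F : 'I_m -> V) : \sum_j F (ordS j) = \sum_j F j.
Proof. by rewrite [RHS](reindex_inj (@ordS_inj _)). Qed.

End H.

Theorem proposition3p7 (R : realType) (n : nat) (K T : set 'rV[R]_n) (m : nat)
    (q : 'I_m -> 'rV[R]_n) (H : 'I_m -> set 'rV[R]_n) (nK : 'I_m -> 'rV[R]_n) :
  convex_body K -> convex_body T -> minkowski_billiard K T q H nK ->
  in_conv_hull nK 0 /\
  (smooth T -> linear_subspace (cone_span nK) /\ dim_le (cone_span nK) m.-1).
Proof.
move=> hK [_ _ hT0] hb.
case: m q H nK hb => [|[|m]] q H nK hb.
- by case: hb => [[]].
- by case: hb => [[]].
case: hb => [[_ hpoly] _ _ hnK [p [mu hpm]]].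
have hd : forall j, p (ordS j) - p j = - (mu (ordS j) *: nK (ordS j)).
  by move=> j; case: (hpm j).
have mu0 : forall j, 0 <= mu j by move=> j; case: (hpm j).
have hs : \sum_j mu j *: nK j = 0.
  have : \sum_j (p (ordS j) - p j) = 0.
    by rewrite sumrB (sum_ordS p) subrr.
  rewrite (eq_bigr _ (fun j _ => hd j)) sumrN.
  have := sum_ordS (fun j => mu j *: nK j); rewrite /= => ->.
  by move/eqP; rewrite oppr_eq0 => /eqP.
have Spos : 0 < \sum_j mu j.
  rewrite lt_neqAle sumr_ge0 // andbT eq_sym; apply/negP => /eqP hS.
  have muz : forall j, mu j = 0.
    by move=> j; apply: (psumr_eq0P (fun i _ => mu0 i) hS).
  have pc : forall j, p (ordS j) = p j.
    by move=> j; apply/eqP; rewrite -subr_eq0 hd muz scale0r oppr0.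
  pose f := fun j => dotv (q (ordS j) - q j) (p j).
  have fpos : forall j, 0 < f j.
    move=> j; case: (hpm j) => _ _ hnc _.
    apply: (nc_pos hT0 hnc).
    by rewrite subr_eq0 eq_sym; case: (hpoly j).
  have : \sum_j f j = 0.
    rewrite /f; under eq_bigr => j _ do rewrite dotvBl -{1}(pc j).
    by rewrite sumrB (sum_ordS (fun j => dotv (q j) (p j))) subrr.
  move=> hf0.
  have h : f ord0 = 0 by apply: (psumr_eq0P (fun i _ => ltW (fpos i)) hf0).
  by have := fpos ord0; rewrite h ltxx.
split.
  exists (fun j => mu j / \sum_j mu j); split.
  - by move=> j; rewrite divr_ge0 // ltW.
  - by rewrite -mulr_suml divff // gt_eqF.
  - under eq_bigr do rewrite mulrC -scalerA.
    by rewrite -scaler_sumr hs scaler0.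
move=> sT.
have mupos : forall k, 0 < mu k.
  move=> k; rewrite lt_neqAle mu0 andbT eq_sym; apply/negP => /eqP mk.
  pose j := ord_pred k.
  have jk : ordS j = k by rewrite /j ord_predK.
  have pjk : p k = p j.
    by apply/eqP; rewrite -subr_eq0 -{1}jk hd jk mk scale0r oppr0.
  have [bpj _ ncj _] := hpm j.
  have [_ _ nck _] := hpm k.
  rewrite jk in ncj; rewrite pjk in nck.
  have a0 : q k - q j != 0.
    by rewrite subr_eq0 eq_sym -{1}jk; case: (hpoly j).
  have b0 : q (ordS k) - q k != 0.
    by rewrite subr_eq0 eq_sym; case: (hpoly k).
  have [c [c0 hbc]] := ray hT0 sT bpj ncj nck a0 b0.
  case: (hpoly k) => _; apply.
  have c1 : 1 + c != 0 by rewrite gt_eqF // addr_gt0.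
  exists (1 / (1 + c)).
    apply/andP; split; first by rewrite divr_ge0 // ltW // addr_gt0.
    by rewrite ler_pdivrMr ?addr_gt0 // mul1r lerDl ltW.
  apply/rowP => i; rewrite !mxE.
  have := congr1 (fun M : 'rV[R]_n => M 0 i) hbc; rewrite /= !mxE.
  move/eqP; rewrite subr_eq => /eqP ->.
  rewrite -/j; field; exact: c1.
split.
  split.
    by exists (fun _ => 0); split => //; rewrite big1 // => j _; rewrite scale0r.
  move=> a x y [lx [_ ->]] [ly [_ ->]].
  have -> : a *: (\sum_j lx j *: nK j) + \sum_j ly j *: nK j
      = \sum_j (a * lx j + ly j) *: nK j.
    by rewrite scaler_sumr -big_split; apply: eq_bigr => j _; rewrite scalerDl scalerA.
  exact: anycoef.
pose B := \matrix_(i < m.+1, k < n) nK (widen_ord (leqnSn _) i) 0 k.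
exists B.
have rowB : forall i, row i B = nK (widen_ord (leqnSn _) i).
  by move=> i; apply/rowP => k; rewrite !mxE.
apply/seteqP; split => x /=.
  move=> [l [_ ->]]; apply/submxP.
  pose c := l ord_max / mu ord_max.
  exists (\row_i (l (widen_ord (leqnSn _) i) - c * mu (widen_ord (leqnSn _) i))).
  rewrite mulmx_sum_row.
  under [RHS]eq_bigr do rewrite rowB mxE scalerBl -scalerA.
  rewrite sumrB -scaler_sumr.
  have := hs; rewrite big_ord_recr /= => /eqP; rewrite addr_eq0 => /eqP ->.
  rewrite [LHS]big_ord_recr /=.
  by rewrite scalerN opprK scalerA /c divfK // gt_eqF.
move=> /submxP [D ->]; rewrite mulmx_sum_row.
have -> : \sum_i D 0 i *: row i B
    = \sum_(j < m.+2) (if (j < m.+1)%N then D 0 (inord j) else 0) *: nK j.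
  rewrite [RHS]big_ord_recr /= ltnn scale0r addr0; apply: eq_bigr => i _.
  by rewrite rowB /= ltn_ord inord_val.
exact: anycoef.
Qed.
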